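(* Let $\ell\ge 1$, $c\ge 1$ and $s\ge 1$ be integers, and let $\underline{\eta}=(\eta_1,\dots,\eta_s)$ be integer thresholds with $1\le \eta_1<\eta_2<\dots<\eta_s\le \ell$. For $x\in\{0,\dots,\ell\}$ let $o(x)=0^{\ell-x}1^{x}$ and $u(x)=1^{x}0^{\ell-x}$ (words of length $\ell$), and for a word $w$ let $w^{c}$ denote the concatenation of $c$ copies of $w$. Define the binary word $$p(c)=o(0)^{c}\;\,0\,o(\eta_1)^{c}\;\,0\,o(\eta_2)^{c}\cdots 0\,o(\eta_s)^{c}\;\,1\,u(\ell)^{c}\;\,1\,u(\eta_s-1)^{c}\;\,1\,u(\eta_{s-1}-1)^{c}\cdots 1\,u(\eta_1-1)^{c}\;\,0,$$ which has length $(2s+2)(c\ell+1)$, and let $v=(v_t)_{t\ge 0}$ be the infinite periodic binary sequence $p(c)p(c)p(c)\cdots$. Let $q=(q_0,\dots,q_{2s+1})=(0,1,\dots,s,s,s-1,\dots,1,0)$. Then for every integer $i\ge 0$, $$\underline{\eta}\Big(\sum_{t=i}^{i+\ell-1} v_t\Big)=q_{\lfloor i/(c\ell+1)\rfloor \bmod (2s+2)}.$$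
   Context: For thresholds $\underline{\eta}=(\eta_1<\dots<\eta_s)$ (positive integers), the SQGT outcome of a nonnegative integer $y$ is $\underline{\eta}(y)=|\{k\in\{1,\dots,s\}:\eta_k\le y\}|\in\{0,\dots,s\}$. The sum $\sum_{t=i}^{i+\ell-1}v_t$ is the inner product of the test $v$ with the length-$\ell$ burst (consecutive block of ones) occupying positions $i,\dots,i+\ell-1$. *)

(* Defs.v *)
From mathcomp Require Import all_boot.
Set Implicit Arguments. Unset Strict Implicit. Unset Printing Implicit Defensive.

(* Thresholds are given as a function eta : nat -> nat, indexed 1..s. *)
Definition sqgt (s : nat) (eta : nat -> nat) (y : nat) : nat :=
  count (fun k => eta k <= y) (iota 1 s).

(* Words are seq nat over {0,1}. *)
Definition oword (ell x : nat) : seq nat := nseq (ell - x) 0 ++ nseq x 1.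
Definition uword (ell x : nat) : seq nat := nseq x 1 ++ nseq (ell - x) 0.
Definition wpow (c : nat) (w : seq nat) : seq nat := flatten (nseq c w).

Definition pword (ell c s : nat) (eta : nat -> nat) : seq nat :=
  wpow c (oword ell 0)
  ++ flatten [seq 0 :: wpow c (oword ell (eta k)) | k <- iota 1 s]
  ++ (1 :: wpow c (uword ell ell))
  ++ flatten [seq 1 :: wpow c (uword ell (eta k - 1)) | k <- rev (iota 1 s)]
  ++ [:: 0].

Definition vseq (ell c s : nat) (eta : nat -> nat) (t : nat) : nat :=
  let p := pword ell c s eta in nth 0 p (t %% size p).

Definition qseq (s j : nat) : nat := if j <= s then j else (2 * s + 1 - j).

(* Main.v *)
Require Import Defs.
From mathcomp Require Import all_boot zify.

Lemma window_sum (P : seq nat) (ell i : nat) :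
  0 < size P -> ell <= size P ->
  \sum_(i <= t < i + ell) nth 0 P (t %% size P)
  = sumn (take ell (drop (i %% size P) (P ++ P))).
Proof.
move=> hP hl.
set L := size P. set d := i %% L.
have hd : d < L by apply: ltn_pmod.
rewrite -(map_nth_iota 0); last by rewrite size_cat; lia.
rewrite sumnE big_map.
rewrite -{1}[i]add0n big_addn.
rewrite addKn.
rewrite -[d in iota d]addn0 iotaDl big_map /index_iota subn0.
apply: eq_big_seq => k; rewrite mem_iota => /andP[_ hk] /=.
have -> : (k + i) %% L = (d + k) %% L by rewrite /d modnDml addnC.
rewrite nth_cat -/L.
case: ltnP => h.
  by rewrite modn_small.
have hlt : d + k - L < L by lia.
congr nth. by rewrite -{1}(subnK h) modnDr modn_small.
Qed.

Definition wv (ell s : nat) (eta : nat -> nat) (j : nat) : nat :=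
  if j == 0 then 0 else if j <= s then eta j
  else if j == s.+1 then ell else eta (2 * s + 2 - j) - 1.
Definition Wd ell s eta (j : nat) : seq nat :=
  if j <= s then oword ell (wv ell s eta j) else uword ell (wv ell s eta j).
Definition sepv (s j : nat) : nat := (s <= j) && (j <= 2 * s).
Definition Cb ell c s eta (j : nat) := wpow c (Wd ell s eta j).
Definition Bb ell c s eta (j : nat) := Cb ell c s eta j ++ [:: sepv s j].

Lemma shift_lemma (C : nat -> seq nat) (sp S : nat -> nat) (z : nat) T :
  forall n j, (forall k, j <= k < j + n -> S k = sp k.+1) -> S (j + n) = z ->
  C j ++ flatten [seq sp k :: C k | k <- iota j.+1 n] ++ z :: T
  = flatten [seq C k ++ [:: S k] | k <- iota j n.+1] ++ T.
Proof.
elim=> [|n IH] j hS hz.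
  by rewrite addn0 in hz; rewrite /= cats0 -catA hz.
rewrite [iota j.+1 _]/= [iota j _]/= /= -!catA /=.
rewrite hS; last by lia.
congr (_ ++ _ :: _).
rewrite (IH j.+1); first by rewrite [iota j.+1 _]/= map_cons /= -!catA.
- by move=> k hk; apply: hS; lia.
- by rewrite -hz; congr S; lia.
Qed.

Lemma rev_iota_map n m b a : a = m + n + b ->
  rev (iota m n) = [seq a - j | j <- iota b.+1 n].
Proof.
elim: n b => [|n IH] b ha //.
rewrite -addn1 iotaD rev_cat /= (IH b.+1); last by lia.
by rewrite addn1 /=; congr (_ :: _); lia.
Qed.

Lemma pword_blocks ell c s eta :
  pword ell c s eta = flatten [seq Bb ell c s eta j | j <- iota 0 (2 * s + 2)].
Proof.
pose sp k := nat_of_bool (s < k).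
have e1 : wpow c (oword ell 0) = Cb ell c s eta 0 by [].
have e2 : [seq 0 :: wpow c (oword ell (eta k)) | k <- iota 1 s]
        = [seq sp k :: Cb ell c s eta k | k <- iota 1 s].
  apply/eq_in_map => k; rewrite mem_iota => hk.
  rewrite /sp /Cb /Wd /wv.
  have -> : (s < k) = false by lia.
  have -> : (k <= s) = true by lia.
  by have -> : (k == 0) = false by lia.
have e3 : 1 :: wpow c (uword ell ell) = sp s.+1 :: Cb ell c s eta s.+1.
  by rewrite /sp /Cb /Wd /wv ltnSn ltnn eqxx.
have e4 : [seq 1 :: wpow c (uword ell (eta k - 1)) | k <- rev (iota 1 s)]
        = [seq sp k :: Cb ell c s eta k | k <- iota s.+2 s].
  rewrite (@rev_iota_map s 1 s.+1 (2 * s + 2)); last by lia.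
  rewrite -map_comp; apply/eq_in_map => k; rewrite mem_iota => hk /=.
  rewrite /sp /Cb /Wd /wv.
  have -> : (s < k) = true by lia.
  have -> : (k <= s) = false by lia.
  have -> : (k == 0) = false by lia.
  by have -> : (k == s.+1) = false by lia.
rewrite /pword e1 e2 e3 e4.
rewrite -[flatten [seq Bb _ _ _ _ j | j <- _]]cats0.
have -> : 2 * s + 2 = (2 * s + 1).+1 by lia.
rewrite -(@shift_lemma (Cb ell c s eta) sp (sepv s) 0 [::] (2 * s + 1) 0).
- have -> : iota 1 (2 * s + 1) = iota 1 s ++ s.+1 :: iota s.+2 s.
    by rewrite (_ : 2 * s + 1 = s + s.+1) ?iotaD ?add1n //; lia.
  by rewrite map_cat flatten_cat /= -!catA /= -!catA.
- by move=> k hk; rewrite /sepv /sp; congr nat_of_bool; lia.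
- by rewrite /sepv (_ : (0 + (2 * s + 1) <= 2 * s) = false) ?andbF //; lia.
Qed.

Lemma drop_catG (T : Type) n (s1 s2 : seq T) :
  drop n (s1 ++ s2) = drop n s1 ++ drop (n - size s1) s2.
Proof.
rewrite drop_cat; case: ltnP => h.
  by rewrite (_ : n - size s1 = 0) ?drop0 //; lia.
by rewrite (drop_oversize h).
Qed.

Lemma take_catG (T : Type) n (s1 s2 : seq T) :
  take n (s1 ++ s2) = take n s1 ++ take (n - size s1) s2.
Proof.
rewrite take_cat; case: ltnP => h.
  by rewrite (_ : n - size s1 = 0) ?take0 ?cats0 //; lia.
by rewrite (take_oversize h).
Qed.

Lemma sumn_nseq0 n : sumn (nseq n 0) = 0.
Proof. by rewrite sumn_nseq. Qed.
Lemma sumn_nseq1 n : sumn (nseq n 1) = n.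
Proof. by rewrite sumn_nseq mul1n. Qed.

Lemma take_nseqG (T : Type) n m (x : T) : take n (nseq m x) = nseq (minn n m) x.
Proof.
case: (leqP n m) => h.
  by rewrite take_nseq // (minn_idPl h).
by rewrite take_oversize ?size_nseq ?(minn_idPr (ltnW h)) // ltnW.
Qed.

Lemma so_drop ell x n : x <= ell ->
  sumn (drop n (oword ell x)) = x - (n - (ell - x)).
Proof.
move=> hx; rewrite /oword drop_catG !drop_nseq size_nseq sumn_cat.
by rewrite sumn_nseq0 sumn_nseq1.
Qed.

Lemma so_take ell x n : x <= ell ->
  sumn (take n (oword ell x)) = minn n ell - (ell - x).
Proof.
move=> hx; rewrite /oword take_catG !take_nseqG size_nseq sumn_cat.
rewrite sumn_nseq0 sumn_nseq1; lia.
Qed.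

Lemma su_drop ell x n : x <= ell ->
  sumn (drop n (uword ell x)) = x - n.
Proof.
move=> hx; rewrite /uword drop_catG !drop_nseq size_nseq sumn_cat.
by rewrite sumn_nseq0 sumn_nseq1 addn0.
Qed.

Lemma su_take ell x n : x <= ell ->
  sumn (take n (uword ell x)) = minn n x.
Proof.
move=> hx; rewrite /uword take_catG !take_nseqG size_nseq sumn_cat.
rewrite sumn_nseq0 sumn_nseq1; lia.
Qed.

Lemma size_oword ell x : x <= ell -> size (oword ell x) = ell.
Proof. by move=> h; rewrite /oword size_cat !size_nseq subnK. Qed.
Lemma size_uword ell x : x <= ell -> size (uword ell x) = ell.
Proof. by move=> h; rewrite /uword size_cat !size_nseq addnC subnK. Qed.

Lemma size_wpow c (W : seq nat) : size (wpow c W) = c * size W.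
Proof. by elim: c => //= c IH; rewrite size_cat IH mulSn. Qed.

Lemma wpowS c (W : seq nat) : wpow c.+1 W = W ++ wpow c W.
Proof. by []. Qed.

Lemma drop_wpow q c (W : seq nat) :
  drop (q * size W) (wpow c W) = wpow (c - q) W.
Proof.
elim: q c => [|q IH] c; first by rewrite mul0n drop0 subn0.
case: c => [|c]; first by rewrite drop_oversize.
by rewrite wpowS drop_catG drop_oversize ?mulSn ?leq_addr // addKn IH subSS.
Qed.

Lemma sumn_rot (W Y : seq nat) r : r <= size W -> take r Y = take r W ->
  sumn (take (size W) (drop r W ++ Y)) = sumn W.
Proof.
move=> hr hY; rewrite take_catG take_oversize; last by rewrite size_drop leq_subr.
rewrite size_drop.
have -> : size W - (size W - r) = r by lia.
by rewrite hY sumn_cat addnC -sumn_cat cat_take_drop.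
Qed.

Lemma window_block c ell (W W' : seq nat) (sp : nat) (Z : seq nat) r :
  0 < c -> 0 < ell -> size W = ell -> size W' = ell -> r < c * ell + 1 ->
  sumn (take ell (drop r (wpow c W ++ sp :: wpow c W' ++ Z)))
  = if r + ell <= c * ell then sumn W
    else sumn (drop (r - (c - 1) * ell) W) + sp
         + sumn (take (r - (c - 1) * ell - 1) W').
Proof.
move=> hc hl hW hW' hr.
rewrite drop_catG size_wpow hW.
case: ifP => hcase.
  have hsub : r - c * ell = 0 by lia.
  rewrite hsub drop0.
  set q := r %/ ell. set r' := r %% ell.
  have hrq : r = q * ell + r' by rewrite /q /r' -divn_eq.
  have hr' : r' < ell by rewrite /r' ltn_mod.
  have hqc : q < c.
    case: (ltnP q c) => // hh; have : c * ell <= q * ell by apply: leq_mul.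
    lia.
  rewrite hrq addnC -drop_drop -{2}hW drop_wpow.
  have -> : c - q = (c - q - 1).+1 by lia.
  rewrite wpowS drop_catG.
  have -> : r' - size W = 0 by lia.
  rewrite drop0 -catA -{1}hW sumn_rot ?hW //; first lia.
  case: (posnP r') => h0; first by rewrite h0 !take0.
  have hc2 : 0 < c - q - 1 by nia.
  rewrite -(prednK hc2) wpowS -catA takel_cat; last by rewrite hW ltnW.
  by [].
have hsub : r - c * ell = 0 by lia.
rewrite hsub drop0.
have hce : c * ell = (c - 1) * ell + ell by rewrite -{1}(subnK hc) mulnDl mul1n addnC.
set r' := r - (c - 1) * ell.
have hrq : r = r' + (c - 1) * ell by rewrite /r'; nia.
rewrite hrq -drop_drop -{2}hW drop_wpow.
have -> : c - (c - 1) = 1 by lia.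
rewrite wpowS cats0 take_catG take_oversize; last by rewrite size_drop; lia.
rewrite size_drop hW.
have -> : ell - (ell - r') = r'.-1.+1 by nia.
rewrite /= sumn_cat /=.
rewrite -(prednK hc) wpowS -catA takel_cat; last by rewrite hW'; lia.
by rewrite subn1 addnA.
Qed.

Lemma eta_mono s (eta : nat -> nat)
  (hinc : forall k, 1 <= k -> k < s -> eta k < eta k.+1) :
  forall a b, 1 <= a -> a < b -> b <= s -> eta a < eta b.
Proof.
move=> a; elim=> [|b IH] // ha hab hb.
case: (ltngtP a b) => h.
- apply: (ltn_trans (IH ha h (ltnW hb))); apply: hinc; lia.
- lia.
- by rewrite h; apply: hinc; lia.
Qed.

Lemma sqgt_eq s (eta : nat -> nat) y q : q <= s ->
  (forall k, 1 <= k -> k <= q -> eta k <= y) ->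
  (forall k, q < k -> k <= s -> y < eta k) -> sqgt s eta y = q.
Proof.
move=> hq h1 h2; rewrite /sqgt.
rewrite (_ : s = q + (s - q)); last by lia.
rewrite iotaD count_cat.
rewrite (@eq_in_count _ _ predT); last first.
  by move=> k; rewrite mem_iota => hk /=; apply: h1; lia.
rewrite (@eq_in_count _ _ pred0 (iota (1 + q) _)); last first.
  move=> k; rewrite mem_iota => hk /=; apply/negbTE; rewrite -ltnNge.
  apply: h2; lia.
by rewrite count_predT count_pred0 size_iota addn0.
Qed.

Lemma sqgt_eq2 s (eta : nat -> nat) y q
  (hinc : forall k, 1 <= k -> k < s -> eta k < eta k.+1) : q <= s ->
  (0 < q -> eta q <= y) -> (q < s -> y < eta q.+1) -> sqgt s eta y = q.
Proof.
move=> hq h1 h2; apply: sqgt_eq => // k hk1 hk2.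
- case: (ltngtP k q) => h.
  + have hq0 : 0 < q by lia.
    apply: (leq_trans _ (h1 hq0)).
    by apply: ltnW; apply: (@eta_mono s eta hinc); lia.
  + lia.
  + by rewrite h; apply: h1; lia.
- case: (ltngtP q.+1 k) => h.
  + have hqs : q < s by lia.
    apply: (leq_trans (h2 hqs)).
    by apply: ltnW; apply: (@eta_mono s eta hinc); lia.
  + lia.
  + by rewrite -h; apply: h2; lia.
Qed.

Lemma size_blocks (B : nat -> seq nat) m :
  forall n a, (forall k, a <= k < a + n -> size (B k) = m) ->
  size (flatten [seq B k | k <- iota a n]) = n * m.
Proof.
elim=> [|n IH] a hB //=.
rewrite size_cat hB ?IH ?mulSn //; [move=> k hk; apply: hB|]; lia.
Qed.

Lemma drop_blocks (B : nat -> seq nat) m (Y : seq nat) :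
  forall J n a, (forall k, a <= k < a + n -> size (B k) = m) -> J <= n ->
  drop (J * m) (flatten [seq B k | k <- iota a n] ++ Y)
  = flatten [seq B k | k <- iota (a + J) (n - J)] ++ Y.
Proof.
elim=> [|J IH] n a hB hJ; first by rewrite mul0n drop0 addn0 subn0.
case: n hB hJ => [|n] hB hJ //.
rewrite /= -catA drop_catG drop_oversize; last by rewrite hB ?mulSn; lia.
rewrite hB; last by lia.
have -> : J.+1 * m - m = J * m by rewrite mulSn addnC addnK.
rewrite IH //; last by move=> k hk; apply: hB; lia.
by rewrite addSnnS subSS.
Qed.

Lemma modn_split i m N : 0 < m -> 0 < N ->
  i %% (N * m) = (i %/ m %% N) * m + i %% m.
Proof.
move=> hm hN.
have e1 := divn_eq i m. have e2 := divn_eq (i %/ m) N.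
have hr : i %% m < m by rewrite ltn_mod.
have hJ : i %/ m %% N < N by rewrite ltn_mod.
rewrite {1}e1 {1}e2 mulnDl -mulnA -addnA modnMDl.
rewrite modn_small //.
have : (i %/ m %% N).+1 * m <= N * m by rewrite leq_mul2r hJ orbT.
rewrite mulSn; lia.
Qed.

Definition nx s J := if J == 2 * s + 1 then 0 else J.+1.

Section Final.
Variables (ell s : nat) (eta : nat -> nat).
Hypotheses (hell : 1 <= ell) (hs : 1 <= s) (heta1 : 1 <= eta 1)
  (hinc : forall k, 1 <= k -> k < s -> eta k < eta k.+1)
  (hetas : eta s <= ell).

Lemma eta_lo k : 1 <= k <= s -> 1 <= eta k.
Proof.
move=> /andP[h1 h2]; case: (ltngtP 1 k) => h; last by rewrite -h.
- by apply: (leq_trans heta1); apply: ltnW; apply: (@eta_mono s eta hinc).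
- lia.
Qed.

Lemma eta_hi k : 1 <= k <= s -> eta k <= ell.
Proof.
move=> /andP[h1 h2]; case: (ltngtP k s) => h; last by rewrite h.
- by apply: leq_trans hetas; apply: ltnW; apply: (@eta_mono s eta hinc).
- lia.
Qed.

Lemma eta_lt a b : 1 <= a -> a < b -> b <= s -> eta a < eta b.
Proof. exact: (@eta_mono s eta hinc). Qed.


Lemma Wd0 : Wd ell s eta 0 = oword ell 0.
Proof. by []. Qed.
Lemma WdA J : 1 <= J <= s -> Wd ell s eta J = oword ell (eta J).
Proof.
move=> /andP[h1 h2]; rewrite /Wd /wv h2.
by rewrite (_ : (J == 0) = false) //; lia.
Qed.
Lemma WdT : Wd ell s eta s.+1 = uword ell ell.
Proof. by rewrite /Wd /wv ltnn eqxx. Qed.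
Lemma WdD J : s.+1 < J -> Wd ell s eta J = uword ell (eta (2 * s + 2 - J) - 1).
Proof.
move=> h; rewrite /Wd /wv.
rewrite (_ : (J <= s) = false); last by lia.
rewrite (_ : (J == 0) = false); last by lia.
by rewrite (_ : (J == s.+1) = false) //; lia.
Qed.

Lemma sepvE J : sepv s J = ((s <= J) && (J <= 2 * s) : nat).
Proof. by []. Qed.

Lemma sumn_o x : x <= ell -> sumn (oword ell x) = x.
Proof. by move=> h; rewrite -(drop0 (oword ell x)) so_drop // subn0; lia. Qed.
Lemma sumn_u x : x <= ell -> sumn (uword ell x) = x.
Proof. by move=> h; rewrite -(drop0 (uword ell x)) su_drop // subn0. Qed.

Lemma qseqE J : qseq s J = if J <= s then J else 2 * s + 1 - J.
Proof. by []. Qed.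

Lemma finalA J : J < 2 * s + 2 ->
  sqgt s eta (sumn (Wd ell s eta J)) = qseq s J.
Proof.
move=> hJ; rewrite qseqE.
have : J = 0 \/ (1 <= J <= s) \/ J = s.+1 \/ (s.+1 < J) by lia.
case=> [->|[hJ1|[->|hJ1]]].
- rewrite Wd0 sumn_o // /=.
  by apply: sqgt_eq2 => //; lia.
- have h1 := @eta_lo J hJ1; have h2 := @eta_hi J hJ1.
  rewrite WdA // sumn_o // (_ : J <= s) ?hJ1; last by lia.
  apply: sqgt_eq2 => //; first by lia.
  move=> hJs; apply: eta_lt; lia.
- have h2 : eta s <= ell by [].
  rewrite WdT sumn_u // (_ : (s.+1 <= s) = false); last by lia.
  rewrite (_ : 2 * s + 1 - s.+1 = s); last by lia.
  by apply: sqgt_eq2 => //; lia.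
- set q := 2 * s + 1 - J.
  have hq : 2 * s + 2 - J = q.+1 by rewrite /q; lia.
  have hqr : 1 <= q.+1 <= s by rewrite /q; lia.
  have h1 := @eta_lo q.+1 hqr; have h2 := @eta_hi q.+1 hqr.
  rewrite WdD // hq sumn_u; last by lia.
  rewrite (_ : (J <= s) = false); last by lia.
  apply: sqgt_eq2 => //; [lia| |lia].
  move=> hq0; have : eta q < eta q.+1 by apply: eta_lt; lia.
  lia.
Qed.


Lemma finalB J r : J < 2 * s + 2 -> 1 <= r <= ell ->
  sqgt s eta (sumn (drop r (Wd ell s eta J)) + sepv s J
              + sumn (take (r - 1) (Wd ell s eta (nx s J)))) = qseq s J.
Proof.
move=> hJ hr; rewrite qseqE.
have : J = 0 \/ (1 <= J < s) \/ J = s \/ J = s.+1 \/ (s.+1 < J <= 2 * s)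
       \/ J = 2 * s + 1 by lia.
case=> [->|[hJ1|[->|[->|[hJ1|->]]]]].
- have h11 : 1 <= 1 <= s by lia.
  have h1 := @eta_lo 1 h11; have h2 := @eta_hi 1 h11.
  rewrite /nx (_ : (0 == 2 * s + 1) = false); last by lia.
  rewrite Wd0 WdA // so_drop // so_take // /sepv /=.
  apply: sqgt_eq2 => //; lia.
- have hJa : 1 <= J <= s by lia.
  have hJb : 1 <= J.+1 <= s by lia.
  have h1 := @eta_lo J hJa; have h2 := @eta_hi J hJa.
  have h3 := @eta_lo J.+1 hJb; have h4 := @eta_hi J.+1 hJb.
  have h5 : eta J < eta J.+1 by apply: eta_lt; lia.
  rewrite /nx (_ : (J == 2 * s + 1) = false); last by lia.
  rewrite WdA // WdA // so_drop // so_take //.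
  rewrite /sepv (_ : (s <= J) = false) /=; last by lia.
  rewrite (_ : (J <= s) = true); last by lia.
  apply: sqgt_eq2 => //; lia.
- have hJa : 1 <= s <= s by lia.
  have h1 := @eta_lo s hJa; have h2 := @eta_hi s hJa.
  rewrite /nx (_ : (s == 2 * s + 1) = false); last by lia.
  rewrite WdA // WdT so_drop // su_take //.
  have e1 : (s <= 2 * s) = true by lia.
  rewrite /sepv leqnn e1 /=.
  apply: sqgt_eq2 => //; lia.
- have hJa : 1 <= s <= s by lia.
  have h1 := @eta_lo s hJa; have h2 := @eta_hi s hJa.
  rewrite /nx (_ : (s.+1 == 2 * s + 1) = false); last by lia.
  rewrite WdT WdD; last by lia.
  rewrite (_ : 2 * s + 2 - s.+2 = s); last by lia.
  rewrite su_drop // su_take; last by lia.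
  have e1 : (s <= s.+1) = true by lia.
  have e2 : (s.+1 <= 2 * s) = true by lia.
  rewrite /sepv e1 e2 /=.
  rewrite (_ : (s.+1 <= s) = false); last by lia.
  rewrite (_ : 2 * s + 1 - s.+1 = s); last by lia.
  apply: sqgt_eq2 => //; lia.
- set q := 2 * s + 1 - J.
  have hq : 2 * s + 2 - J = q.+1 by rewrite /q; lia.
  have hq' : 2 * s + 2 - J.+1 = q by rewrite /q; lia.
  have hqa : 1 <= q <= s by rewrite /q; lia.
  have hqb : 1 <= q.+1 <= s by rewrite /q; lia.
  have h1 := @eta_lo q hqa; have h2 := @eta_hi q hqa.
  have h3 := @eta_lo q.+1 hqb; have h4 := @eta_hi q.+1 hqb.
  have h5 : eta q < eta q.+1 by apply: eta_lt; lia.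
  rewrite /nx (_ : (J == 2 * s + 1) = false); last by lia.
  rewrite WdD; last by lia.
  rewrite WdD; last by lia.
  rewrite hq hq' su_drop; last by lia.
  rewrite su_take; last by lia.
  have e1 : (s <= J) = true by lia.
  have e2 : (J <= 2 * s) = true by lia.
  rewrite /sepv e1 e2 /=.
  rewrite (_ : (J <= s) = false); last by lia.
  apply: sqgt_eq2 => //; lia.
- have h11 : 1 <= 1 <= s by lia.
  have h1 := @eta_lo 1 h11; have h2 := @eta_hi 1 h11.
  rewrite /nx eqxx WdD; last by lia.
  rewrite (_ : 2 * s + 2 - (2 * s + 1) = 1); last by lia.
  rewrite Wd0 su_drop ?so_take //; last by lia.
  rewrite /sepv (_ : (2 * s + 1 <= 2 * s) = false) ?andbF /=; last by lia.
  rewrite (_ : (2 * s + 1 <= s) = false); last by lia.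
  rewrite (_ : 2 * s + 1 - (2 * s + 1) = 0); last by lia.
  apply: sqgt_eq2 => //; lia.
Qed.

End Final.

Theorem mainTheorem1 (ell c s : nat) (eta : nat -> nat)
  (hell : 1 <= ell) (hc : 1 <= c) (hs : 1 <= s)
  (heta1 : 1 <= eta 1)
  (hinc : forall k, 1 <= k -> k < s -> eta k < eta k.+1)
  (hetas : eta s <= ell) :
  forall i : nat,
    sqgt s eta (\sum_(i <= t < i + ell) vseq ell c s eta t)
    = qseq s ((i %/ (c * ell + 1)) %% (2 * s + 2)).
Proof.
move=> i.
set m := c * ell + 1. set N := 2 * s + 2.
have hwv : forall k, k < N -> wv ell s eta k <= ell.
  move=> k hk; rewrite /wv.
  case: eqP => // h0; case: ifP => hks.
    by apply: (@eta_hi ell s eta hell hs heta1 hinc hetas); lia.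
  case: eqP => // hk1.
  have : eta (2 * s + 2 - k) <= ell by apply: (@eta_hi ell s eta hell hs heta1 hinc hetas); lia.
  lia.
have hWd : forall k, k < N -> size (Wd ell s eta k) = ell.
  move=> k hk; rewrite /Wd; case: ifP => _.
  - by rewrite size_oword // hwv.
  - by rewrite size_uword // hwv.
have hB : forall k, 0 <= k < 0 + N -> size (Bb ell c s eta k) = m.
  move=> k hk; rewrite /Bb /Cb size_cat size_wpow hWd //; lia.
set P := pword ell c s eta.
have hP : P = flatten [seq Bb ell c s eta j | j <- iota 0 N] by apply: pword_blocks.
have hsz : size P = N * m by rewrite hP (@size_blocks _ m N 0 hB).
have hm : 0 < m by rewrite /m addn1.
have hN : 0 < N by rewrite /N addn2.
rewrite /vseq -/P window_sum; last first.
- rewrite hsz.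
  have hle : ell <= m by rewrite /m; apply: leq_trans (leq_pmull ell hc) (leq_addr 1 _).
  exact: leq_trans hle (leq_pmull m hN).
- by rewrite hsz muln_gt0 hN hm.
rewrite hsz modn_split //.
set J := i %/ m %% N. set r := i %% m.
have hJ : J < N by rewrite ltn_mod.
have hr : r < m by rewrite ltn_mod.
rewrite addnC -drop_drop.
have [Z HZ] : exists Z, drop (J * m) (P ++ P)
   = wpow c (Wd ell s eta J) ++ sepv s J :: wpow c (Wd ell s eta (nx s J)) ++ Z.
  rewrite {1}hP (@drop_blocks _ m P J N 0 hB (ltnW hJ)) add0n.
  case: (boolP (J == 2 * s + 1)) => hJe.
  - have e1 : N - J = 1 by rewrite /N; move/eqP: hJe; lia.
    have e2 : N = N.-1.+1 by lia.
    rewrite e1 /nx hJe hP e2.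
    exists (sepv s 0 :: flatten [seq Bb ell c s eta j | j <- iota 1 N.-1]).
    by rewrite /= /Bb /Cb cats0 -!catA.
  - have e1 : N - J = (N - J - 2).+2 by rewrite /N; move/eqP: hJe; lia.
    rewrite e1.
    exists (sepv s J.+1 :: flatten [seq Bb ell c s eta j | j <- iota J.+2 (N - J - 2)] ++ P).
    by rewrite /nx (negbTE hJe) /= /Bb /Cb -!catA.
have hnx : nx s J < N by rewrite /nx; case: ifP => /eqP h; rewrite /N in hJ *; lia.
rewrite HZ window_block ?hWd //.
case: ifP => hcase.
- exact: (@finalA ell s eta hell hs heta1 hinc hetas J hJ).
- apply: (@finalB ell s eta hell hs heta1 hinc hetas J _ hJ).
  have hce : c * ell = (c - 1) * ell + ell by rewrite -{1}(subnK hc) mulnDl mul1n addnC.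
  rewrite /m in hr. lia.
Qed.
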